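(* Let $q$ be a prime power and let $\mathcal{C}\subseteq\mathbb{F}_q^N$ be a $(u,v)$-ordered-batch code of dimension $n$ and redundancy $r=N-n$, where $u,v$ are positive integers with $v\ge2$, $uv\le n$, and $q\ge\max\{4u\binom{n}{u},7\}$. For each $u$-subset $I=\{i_1,\dots,i_u\}\subseteq[n]$ fix a family of pairwise disjoint recovering sets $R_{j,l}=R_{j,l}(I)$ ($j\in[u]$, $l\in[v]$) as in the definition of a $(u,v)$-ordered-batch code. Then there exists an $(r-v+2)$-dimensional subspace $V$ of the dual code $\mathcal{C}^{\perp}$ such that for every $u$-subset $I=\{i_1,\dots,i_u\}\subseteq[n]$ and every $j\in[u]$, $V$ contains a vector $\mathbf{v}_j$ with $i_j\in\operatorname{supp}(\mathbf{v}_j)\subseteq\big(\bigcup_{l=2}^{v}R_{j,l}\big)\cup\{i_j\}$.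
   Context: $[m]=\{1,\dots,m\}$. A linear code $\mathcal{C}\subseteq\mathbb{F}^N$ of dimension $n$ is systematic if for every $\mathbf{x}\in\mathbb{F}^n$ there is a unique codeword whose first $n$ coordinates equal $\mathbf{x}$. A set $R\subseteq[N]$ is a recovering set for $i\in[n]$ if there are scalars $\lambda_k$ ($k\in R$) with $\mathbf{c}(i)=\sum_{k\in R}\lambda_k\mathbf{c}(k)$ for all $\mathbf{c}\in\mathcal{C}$. $(u,v)$-ordered-batch code: a systematic linear code $\mathcal{C}\subseteq\mathbb{F}^N$ of dimension $n$ such that for every set $I=\{i_1,\dots,i_u\}\subseteq[n]$ of $u$ distinct indices there exist $uv$ pairwise disjoint sets $R_{j,l}\subseteq[N]$ ($j\in[u]$, $l\in[v]$), each $R_{j,l}$ a recovering set for $i_j$, such that the directed graph $D_I$ with vertex set $I$ and an arc $i_j\to i_k$ (for $j,k\in[u]$, $j=k$ allowed) whenever $i_k\in\bigcup_{l=1}^{v}R_{j,l}$, is acyclic (no directed cycles, no loops). $\mathcal{C}^\perp$ is the dual code (dimension $r$), and $\operatorname{supp}(\mathbf{w})$ is the set of nonzero coordinates of $\mathbf{w}$. *)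

(* Defs.v *)
From HB Require Import structures.
From mathcomp Require Import all_boot all_order all_algebra.
Set Implicit Arguments. Unset Strict Implicit. Unset Printing Implicit Defensive.
Import GRing.Theory.
Local Open Scope ring_scope.

(* Conventions: length N = n + r; coordinates are 'I_(n + r); the
   information (systematic) coordinates are the first n, i.e. lshift r i
   for i : 'I_n.  A linear code C is the row space of a matrix
   C : 'M[F]_(n + r); a word c : 'rV_(n+r) is a codeword iff (c <= C)%MS. *)

Section Codes.
Variables (F : fieldType) (n r : nat).
Local Notation N := (n + r).

Definition info (i : 'I_n) : 'I_N := lshift r i.

Definition systematic (C : 'M[F]_N) : Prop :=
  forall x : 'rV[F]_n, exists! c : 'rV[F]_N, (c <= C)%MS /\ lsubmx c = x.

Definition recovering (C : 'M[F]_N) (i : 'I_n) (R : {set 'I_N}) : Prop :=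
  exists lam : 'I_N -> F, forall c : 'rV[F]_N, (c <= C)%MS ->
    c 0 (info i) = \sum_(k in R) lam k * c 0 k.

Definition dual_code (C : 'M[F]_N) : 'M[F]_N := kermx C^T.

Definition supp (w : 'rV[F]_N) : {set 'I_N} := [set k | w 0 k != 0].

Definition acyclic_rel (T : finType) (e : rel T) : Prop :=
  forall x y, e x y -> ~~ connect e y x.

(* For a u-subset I, an ordering ord : 'I_u -> 'I_n of I (i_j = ord j) and
   sets R j l (j in [u], l in [v]) as required by the definition of a
   (u,v)-ordered-batch code. *)
Definition obc_witness (C : 'M[F]_N) (u v : nat) (I : {set 'I_n})
    (ord : 'I_u -> 'I_n) (R : 'I_u -> 'I_v -> {set 'I_N}) : Prop :=
  [/\ injective ord,
      [set ord j | j : 'I_u] = I,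
      (forall j j' l l', (j, l) != (j', l') -> [disjoint R j l & R j' l']),
      (forall j l, recovering C (ord j) (R j l)) &
      acyclic_rel [rel j k : 'I_u | info (ord k) \in \bigcup_(l < v) R j l]].

End Codes.

Arguments obc_witness {F n r} C u v I ord R.

Definition ordered_batch_code {F : fieldType} {n r : nat} (C : 'M[F]_(n + r)) (u v : nat) : Prop :=
  systematic C /\
  forall I : {set 'I_n}, #|I| = u ->
    exists ord, exists R, obc_witness C u v I ord R.

(* Main.v *)
Require Import Defs.
From HB Require Import structures.
From mathcomp Require Import all_boot all_order all_algebra.
From mathcomp Require mxabelem.
From mathcomp Require Import zify.
Set Implicit Arguments. Unset Strict Implicit. Unset Printing Implicit Defensive.
Import GRing.Theory.
Local Open Scope ring_scope.

Lemma rank_colmx (F : fieldType) m1 m2 k (A : 'M[F]_(m1, k)) (B : 'M[F]_(m2, k)) :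
  \rank (col_mx A B) = \rank (A + B)%MS.
Proof. by rewrite -addsmxE. Qed.

Lemma card_bigcup_seq (T I : finType) (s : seq I) (B : I -> {set T}) :
  (#|\bigcup_(p <- s) B p| <= \sum_(p <- s) #|B p|)%N.
Proof.
elim: s => [|p s IH]; first by rewrite !big_nil cards0.
rewrite !big_cons; apply: leq_trans (leq_of_leqif (leq_card_setU _ _)) _.
by rewrite leq_add2l.
Qed.

Lemma sys_rank (F : finFieldType) n r (C : 'M[F]_(n + r)) :
  systematic C -> \rank C = n.
Proof.
move=> Hsys.
have gt1 : (1 < #|F|)%N by exact: card_finNzRing_gt1.
apply: (expnI gt1); rewrite -mxabelem.card_rowg.
have inj : {in mxabelem.rowg C &, injective (@lsubmx F 1 n r)}.
  move=> c1 c2; rewrite !inE => c1C c2C e.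
  have [c [_ uq]] := Hsys (lsubmx c1).
  by rewrite -(uq c1) ?(uq c2).
have himg : [set lsubmx x | x in mxabelem.rowg C] = [set: 'rV[F]_n].
  apply/setP => x; rewrite inE; apply/imsetP.
  have [c [[cC cx] _]] := Hsys x.
  by exists c => //; rewrite inE.
by rewrite -(card_in_imset inj) himg cardsT card_mx mul1n.
Qed.

Lemma W_exists (F : finFieldType) n r m u (C : 'M[F]_(n + r)) (I : {set 'I_n})
  (ordI : 'I_u -> 'I_n) (RI : 'I_u -> 'I_(m.+2) -> {set 'I_(n + r)}) (j : 'I_u) :
  systematic C -> obc_witness C u m.+2 I ordI RI ->
  exists W : 'M[F]_(m.+1, n + r),
    [/\ (W <= dual_code C)%MS, row_free W,
        (forall l, W l (info r (ordI j)) = 1) &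
        (forall l k, W l k != 0 -> k = info r (ordI j) \/ k \in RI j (lift ord0 l))].
Proof.
move=> Hsys [_ _ Hdisj Hrec Hacyc].
set i := info r (ordI j).
have notin l : i \notin RI j l.
  apply/negP => h.
  have arc : info r (ordI j) \in \bigcup_(l0 < m.+2) RI j l0 by apply/bigcupP; exists l.
  by have := Hacyc j j arc; rewrite connect0.
have [lam Hlam] := fin_all_exists (fun l : 'I_(m.+1) => Hrec j (lift ord0 l)).
pose W := \matrix_(l, k) ((k == i)%:R - (k \in RI j (lift ord0 l))%:R * lam l k) : 'M[F]_(m.+1, n + r).
have Wi l : W l i = 1.
  by rewrite mxE eqxx (negbTE (notin _)) mul0r subr0.
exists W; split => //.
- apply/row_subP => l; rewrite /dual_code; apply/sub_kermxP; apply/rowP => s.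
  rewrite !mxE.
  have Hs := Hlam l (row s C) (row_sub s C); rewrite mxE in Hs.
  under eq_bigr => k _ do rewrite !mxE mulrBl.
  rewrite sumrB (bigD1 i) //= eqxx mul1r big1 => [|k /negbTE -> ]; last by rewrite mul0r.
  rewrite addr0 Hs (big_mkcond (fun k => k \in _)) /=.
  apply/eqP; rewrite subr_eq0; apply/eqP/eq_bigr => k _; rewrite !mxE.
  by case: (k \in _); rewrite ?mul1r ?mul0r.
- rewrite -kermx_eq0; apply/rowV0P => b /sub_kermxP bW0; apply/rowP => l; rewrite mxE.
  have [c [[cC cx] _]] := Hsys (delta_mx 0 (ordI j)).
  have ci : c 0 i = 1.
    have := congr1 (fun M : 'rV[F]_n => M 0 (ordI j)) cx; rewrite !mxE !eqxx /= => h.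
    by rewrite /i /info h.
  have [k kR lk] : exists2 k, k \in RI j (lift ord0 l) & lam l k != 0.
    case: (pickP (fun k => (k \in RI j (lift ord0 l)) && (lam l k != 0))) => [k /andP[]|none].
      by exists k.
    have := Hlam l c cC; rewrite ci big1 => [/eqP|k kR]; first by rewrite oner_eq0.
    by have := none k; rewrite kR /= => /negbFE/eqP ->; rewrite mul0r.
  have := congr1 (fun M : 'rV[F]_(n + r) => M 0 k) bW0; rewrite !mxE (bigD1 l) //= big1 ?addr0.
    have -> : W l k = - lam l k.
      rewrite mxE kR mul1r; case: eqP => [ek|]; last by rewrite sub0r.
      by move: (notin (lift ord0 l)); rewrite -ek kR.
    by move/eqP; rewrite mulf_eq0 oppr_eq0 (negbTE lk) orbF => /eqP.
  move=> l' nl'; rewrite mxE.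
  have kR' : (k \in RI j (lift ord0 l')) = false.
    apply: (disjointFr (Hdisj j j (lift ord0 l) (lift ord0 l') _)) kR.
    by rewrite xpair_eqE eqxx /= (inj_eq lift_inj) eq_sym.
  have ki : (k == i) = false.
    by apply/negP => /eqP ek; move: (notin (lift ord0 l)); rewrite -ek kR.
  by rewrite kR' ki mul0r subr0 mulr0.
- move=> l k; rewrite mxE; case: (eqVneq k i) => [->|ki]; first by left.
  by case: (boolP (k \in _)) => kR; [right | rewrite mul0r subr0 eqxx].
Qed.
Section Greedy.
Variables (F : finFieldType) (N m : nat) (T : finType) (P : {set T}).
Variables (a : T -> 'rV[F]_N) (Z : T -> 'M[F]_(N, m.+1)).
Hypothesis HP : (#|P| < #|F|)%N.
Hypothesis Zfull : forall p, p \in P -> row_full (Z p).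
Hypothesis aZ : forall p, p \in P -> a p *m Z p != 0.

Lemma gt1F : (1 < #|F|)%N.
Proof. exact: card_finNzRing_gt1. Qed.

Lemma greedy t : (t <= m)%N -> exists Psi : 'M[F]_(t, N),
  forall p, p \in P -> \rank (col_mx (a p) Psi *m Z p) = t.+1.
Proof.
elim: t => [_|t IH ltm].
  exists 0 => p Pp; apply/eqP; rewrite eqn_leq rank_leq_row /=.
  rewrite mul_col_mx rank_colmx; apply: leq_trans (mxrankS (addsmxSl _ _)).
  rewrite lt0n mxrank_eq0; exact: aZ.
have [Psi HPsi] := IH (ltnW ltm).
pose G p := col_mx (a p) Psi *m Z p.
pose B p := mxabelem.rowg (kermx (Z p *m cokermx (G p))).
have Bcard p : p \in P -> (#|B p| * #|F| <= #|F| ^ N)%N.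
  move=> Pp; rewrite /B mxabelem.card_rowg -expnSr leq_exp2l; last exact: gt1F.
  rewrite ltn_neqAle.
  rewrite rank_leq_col andbT; apply/negP => /eqP hfull.
  have: ~~ (1%:M <= G p)%MS.
    by rewrite sub1mx /row_full HPsi // eqSS ltn_eqF.
  case/row_subPn => i Hi.
  have: (row i (1%:M : 'M[F]_(m.+1)) <= Z p)%MS by apply: submx_full; exact: Zfull.
  case/submxP => x Hx.
  have : (x <= kermx (Z p *m cokermx (G p)))%MS.
    by apply: submx_full; rewrite /row_full hfull.
  by move/sub_kermxP; rewrite mulmxA -Hx => /eqP; rewrite -submxE (negbTE Hi).
have Ucard : (#|\bigcup_(p in P) B p| < #|{: 'rV[F]_N}|)%N.
  rewrite card_mx mul1n -big_enum /=.
  apply: leq_ltn_trans (card_bigcup_seq _ _) _.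
  rewrite -(ltn_pmul2r (ltnW gt1F)) big_distrl /=.
  apply: (@leq_ltn_trans (\sum_(p <- enum P) #|F| ^ N)%N).
    by rewrite big_seq [X in (_ <= X)%N]big_seq; apply: leq_sum => p; rewrite mem_enum; apply: Bcard.
  rewrite big_enum /= sum_nat_const -expnSr expnS ltn_pmul2r //.
  by rewrite expn_gt0 (ltnW gt1F).
have : ~~ ([set: 'rV[F]_N] \subset \bigcup_(p in P) B p).
  by apply/negP => /subset_leq_card; rewrite cardsT leqNgt Ucard.
case/subsetPn => psi _ Hpsi.
exists (col_mx psi Psi) => p Pp.
have Hnot : ~~ (psi *m Z p <= G p)%MS.
  apply/negP => h; move/negP: Hpsi; apply; apply/bigcupP; exists p => //.
  by rewrite /B inE; apply/sub_kermxP; rewrite mulmxA; apply/eqP; rewrite -submxE.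
apply/eqP; rewrite eqn_leq rank_leq_row /=.
rewrite mul_col_mx rank_colmx.
have [s1 s2] : (psi *m Z p <= col_mx psi Psi *m Z p)%MS /\ (Psi *m Z p <= col_mx psi Psi *m Z p)%MS.
  by apply/andP; rewrite -col_mx_sub mul_col_mx submx_refl.
have sub : (G p + psi *m Z p <= a p *m Z p + col_mx psi Psi *m Z p)%MS.
  rewrite addsmx_sub /G mul_col_mx col_mx_sub addsmxSl /=.
  by rewrite !(submx_trans _ (addsmxSr _ _)).
apply: leq_trans (mxrankS sub).
rewrite -(HPsi p Pp) -/(G p).
have : (G p < G p + psi *m Z p)%MS.
  rewrite ltmxE addsmxSl /=; apply/negP => h; move/negP: Hnot; apply.
  exact: submx_trans (addsmxSr _ _) h.
by rewrite ltmxErank => /andP[].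
Qed.
End Greedy.

Theorem mainTheorem2 (F : finFieldType) (n r u v : nat) (C : 'M[F]_(n + r))
    (ord : {set 'I_n} -> 'I_u -> 'I_n)
    (R : {set 'I_n} -> 'I_u -> 'I_v -> {set 'I_(n + r)}) :
  (0 < u)%N -> (2 <= v)%N -> (u * v <= n)%N ->
  (maxn (4 * u * 'C(n, u)) 7 <= #|F|)%N ->
  ordered_batch_code C u v ->
  (forall I : {set 'I_n}, #|I| = u -> obc_witness C u v I (ord I) (R I)) ->
  exists V : 'M[F]_(n + r),
    [/\ (V <= dual_code C)%MS,
        \rank V = (r + 2 - v)%N &
        forall I : {set 'I_n}, #|I| = u -> forall j : 'I_u,
          exists w : 'rV[F]_(n + r),
            [/\ (w <= V)%MS,
                info r (ord I j) \in supp w &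
                supp w \subset
                  (\bigcup_(l : 'I_v | (1 <= l)%N) R I j l) :|: [set info r (ord I j)]]].
Proof.
move=> u0 v2 uvn qF [Hsys _] Hwit.
destruct v as [|[|m]]; [by [] | by [] | idtac].
have rkC := sys_rank Hsys.
pose Pset := setX [set A : {set 'I_n} | #|A| == u] [set: 'I_u].
pose props (p : {set 'I_n} * 'I_u) (W : 'M[F]_(m.+1, n + r)) :=
    [/\ (W <= dual_code C)%MS, row_free W,
        (forall l, W l (info r (ord p.1 p.2)) = 1) &
        (forall l k, W l k != 0 -> k = info r (ord p.1 p.2) \/ k \in R p.1 p.2 (lift ord0 l))].
have HW : forall p : ({set 'I_n} * 'I_u)%type, exists W, p \in Pset -> props p W.
  move=> [I j]; case: (boolP ((I, j) \in Pset)) => [|_]; last by exists 0.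
  rewrite in_setX inE => /andP[/eqP cI _].
  by have [W HW] := W_exists j Hsys (Hwit I cI); exists W.
have [Wf HWf] := fin_all_exists HW.
pose a (p : ({set 'I_n} * 'I_u)%type) := delta_mx 0 (info r (ord p.1 p.2)) : 'rV[F]_(n + r).
pose Z p := (Wf p)^T.
have HP : (#|Pset| < #|F|)%N.
  rewrite cardsX card_draws cardsT !card_ord.
  have Cp : (0 < 'C(n, u))%N by rewrite bin_gt0; nia.
  have := leq_trans (leq_maxl _ _) qF; nia.
have Zfull p : p \in Pset -> row_full (Z p).
  move=> Pp; have [_ rf _ _] := HWf p Pp.
  by rewrite /row_full mxrank_tr; move: rf; rewrite /row_free.
have aZ p : p \in Pset -> a p *m Z p != 0.
  move=> Pp; have [_ _ W1 _] := HWf p Pp.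
  apply/eqP => h; have := congr1 (fun M : 'rV[F]_(m.+1) => M 0 ord0) h.
  by rewrite /a -rowE !mxE W1; apply/eqP; rewrite oner_eq0.
have [Psi HPsi] := greedy HP Zfull aZ (leqnn m).
exists (dual_code C :&: kermx Psi^T)%MS; split.
- exact: capmxSl.
- have rkK : \rank (dual_code C) = r.
    by rewrite /dual_code mxrank_ker mxrank_tr rkC addKn.
  have := mxrank_mul_ker (dual_code C) Psi^T.
  have rKP : \rank (dual_code C *m Psi^T) = m.
    apply/eqP; rewrite eqn_leq rank_leq_col /=.
    have : Pset != set0.
      rewrite -card_gt0 cardsX card_draws cardsT !card_ord muln_gt0 u0 bin_gt0 /=. nia.
    case/set0Pn => p0 Pp0.
    have := HPsi p0 Pp0; rewrite mul_col_mx rank_colmx => h.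
    have h1 := leq_of_leqif (mxrank_adds_leqif (a p0 *m Z p0) (Psi *m Z p0)).
    have h2 := rank_leq_row (a p0 *m Z p0).
    have [WK _ _ _] := HWf p0 Pp0.
    have h3 : (\rank (Psi *m Z p0) <= \rank (dual_code C *m Psi^T))%N.
      rewrite -mxrank_tr trmx_mul trmxK; apply: mxrankS; exact: submxMr.
    lia.
  rewrite rKP rkK; set X := \rank _; move=> h; lia.
- move=> I cI j.
  have Pp : (I, j) \in Pset by rewrite in_setX !inE cI eqxx.
  have [WK _ W1 Wsupp] := HWf _ Pp.
  rewrite /= in W1 Wsupp.
  set W := Wf (I, j) in WK W1 Wsupp.
  set i := info r (ord I j) in W1 Wsupp *.
  have HG := HPsi _ Pp.
  pose G := col_mx (a (I, j)) Psi *m W^T.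
  have Gu : (G : 'M[F]_(m.+1)) \in unitmx by rewrite -row_free_unit /row_free HG.
  pose H := W *m (col_mx (a (I, j)) Psi)^T.
  have HGt : H = G^T by rewrite /H /G trmx_mul trmxK.
  have Hu : (H : 'M[F]_(m.+1)) \in unitmx by rewrite HGt unitmx_tr.
  pose e0 := delta_mx 0 (0 : 'I_(1 + m)) : 'rV[F]_(1 + m).
  pose c := e0 *m invmx H.
  pose x := c *m W.
  have hx : x *m (col_mx (a (I, j)) Psi)^T = e0.
    by rewrite /x -mulmxA -/H /c mulmxKV.
  rewrite tr_col_mx mul_mx_row in hx.
  have xPsi : x *m Psi^T = 0.
    have := congr1 rsubmx hx; rewrite row_mxKr => ->.
    by apply/rowP => k; rewrite !mxE.
  have xi : x 0 i = 1.
    have := congr1 lsubmx hx; rewrite row_mxKl => /(congr1 (fun M : 'rV[F]_1 => M 0 0)).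
    rewrite [in X in X = _ -> _]mxE => h.
    have e1 : lsubmx e0 0 0 = 1 by rewrite !mxE.
    rewrite e1 in h; rewrite -h.
    have ai k : (a (I, j))^T k 0 = (k == i)%:R by rewrite !mxE eqxx.
    rewrite (bigD1 i) //= big1 ?addr0; first by rewrite ai eqxx mulr1.
    by move=> k ki; rewrite ai (negbTE ki) mulr0.
  exists x; split.
  - rewrite sub_capmx; apply/andP; split.
      exact: submx_trans (submxMl c W) WK.
    by apply/sub_kermxP.
  - by rewrite inE xi oner_eq0.
  - apply/subsetP => k; rewrite inE => xk.
    have [l Wl] : exists l, W l k != 0.
      case: (pickP (fun l => W l k != 0)) => [l Hl|none]; first by exists l.
      move: xk; rewrite /x mxE big1 ?eqxx // => l _.
      by have := none l; rewrite /= => /negbFE/eqP ->; rewrite mulr0.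
    case: (Wsupp l k Wl) => [->|kR]; first by rewrite in_setU in_set1 eqxx orbT.
    rewrite in_setU; apply/orP; left; apply/bigcupP; exists (lift ord0 l) => //.
Qed.
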